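(* Let $G_\pm(x)=|1+e^{2\pi i x}\pm e^{14\pi i x}|^2$ and $d(t)=\int_0^{1/2}\big[G_-^t(x)-G_+^t(x)\big]\,dx$ for $t>0$. Then $d'(5)>0$.
   Context: For $t>0$, $d^{(j)}(t)=\int_0^{1/2}G_-^t\log^jG_-\,dx-\int_0^{1/2}G_+^t\log^jG_+\,dx$. *)

(* Defs.v *)
From Stdlib Require Import Reals.
From Coquelicot Require Import Coquelicot.
Open Scope R_scope.

Definition cis (th : R) : C := (cos th, sin th).

Definition Gminus (x : R) : R :=
  (Cmod (Cplus (Cplus 1 (cis (2 * PI * x))) (Copp (cis (14 * PI * x))))) ^ 2.

Definition Gplus (x : R) : R :=
  (Cmod (Cplus (Cplus 1 (cis (2 * PI * x))) (cis (14 * PI * x)))) ^ 2.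

(* a^t for a >= 0, t > 0, with the convention 0^t = 0
   (Stdlib's Rpower 0 t would give 1). *)
Definition rpow (a t : R) : R :=
  if Req_EM_T a 0 then 0 else Rpower a t.

Definition d (t : R) : R :=
  RInt (fun x => rpow (Gminus x) t - rpow (Gplus x) t) 0 (1 / 2).

(* Main.v *)
Require Import Defs.
From Stdlib Require Import Reals QArith Qreals Lra Lia List ZArith.
From Coquelicot Require Import Coquelicot.
Import ListNotations.
Open Scope R_scope.


Fixpoint Pev (p : list Q) (x : R) : R :=
  match p with nil => 0 | c :: p' => Q2R c + x * Pev p' x end.

Fixpoint padd (p q : list Q) : list Q :=
  match p, q with
  | nil, _ => q
  | _, nil => p
  | a :: p', b :: q' => Qred (a + b) :: padd p' q'
  end.
Definition pscale (c : Q) (p : list Q) : list Q := map (fun a => Qred (c * a)) p.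
Arguments Qmult : simpl never.
Fixpoint pmul (p q : list Q) : list Q :=
  match p with nil => nil | a :: p' => padd (pscale a q) (0%Q :: pmul p' q) end.
Fixpoint pcomp (p s : list Q) : list Q :=
  match p with nil => nil | a :: p' => padd (a :: nil) (pmul s (pcomp p' s)) end.

Definition qmin0 (q : Q) : Q := if Qle_bool 0 q then 0%Q else q.
Fixpoint lowb (r : list Q) (h : Q) : Q :=
  match r with nil => 0%Q | c :: r' => Qred (c + h * qmin0 (lowb r' h)) end.
Definition nonneg_piece (p : list Q) (a b : Q) : bool :=
  Qle_bool 0 (lowb (pcomp p (a :: 1%Q :: nil)) (b - a)).

Arguments Qred : simpl never.
Lemma Q2R_Qred q : Q2R (Qred q) = Q2R q.
Proof. apply Qeq_eqR, Qred_correct. Qed.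

Lemma Pev_padd p q x : Pev (padd p q) x = Pev p x + Pev q x.
Proof.
  revert q; induction p as [|a p IH]; intros [|b q]; simpl; try lra.
  rewrite IH, Q2R_Qred, Q2R_plus; ring.
Qed.

Lemma Pev_pscale c p x : Pev (pscale c p) x = Q2R c * Pev p x.
Proof.
  induction p as [|a p IH]; simpl; [ring|].
  rewrite IH, Q2R_Qred, Q2R_mult; ring.
Qed.

Lemma Pev_pmul p q x : Pev (pmul p q) x = Pev p x * Pev q x.
Proof.
  induction p as [|a p IH]; simpl; [ring|].
  rewrite Pev_padd, Pev_pscale; simpl. rewrite IH.
  replace (Q2R 0) with 0 by (unfold Q2R; simpl; ring). ring.
Qed.

Lemma Pev_pcomp p s x : Pev (pcomp p s) x = Pev p (Pev s x).
Proof.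
  induction p as [|a p IH]; cbn [Pev pcomp]; [ring|].
  rewrite Pev_padd, Pev_pmul, IH; cbn [Pev]; ring.
Qed.

Lemma Q2R0 : Q2R 0 = 0.
Proof. unfold Q2R; simpl; ring. Qed.

Lemma Q2R_qmin0 q : Q2R (qmin0 q) <= 0 /\ Q2R (qmin0 q) <= Q2R q.
Proof.
  unfold qmin0. destruct (Qle_bool 0 q) eqn:E.
  - apply Qle_bool_iff, Qle_Rle in E. rewrite Q2R0 in *. lra.
  - assert (~ (0 <= q)%Q) by (intro H; apply Qle_bool_iff in H; congruence).
    assert (q < 0)%Q by (apply Qnot_le_lt; auto).
    apply Qlt_Rlt in H0. rewrite Q2R0 in H0. lra.
Qed.

Lemma lowb_sound r h t : 0 <= t <= Q2R h -> Q2R (lowb r h) <= Pev r t.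
Proof.
  intros Ht. induction r as [|c r IH]; simpl.
  - rewrite Q2R0; lra.
  - rewrite Q2R_Qred, Q2R_plus, Q2R_mult.
    destruct (Q2R_qmin0 (lowb r h)) as [H1 H2].
    assert (Q2R h * Q2R (qmin0 (lowb r h)) <= t * Pev r t); [|lra].
    apply Rle_trans with (t * Q2R (qmin0 (lowb r h))).
    + nra.
    + apply Rmult_le_compat_l; lra.
Qed.

Lemma nonneg_piece_sound p a b x :
  nonneg_piece p a b = true -> Q2R a <= x <= Q2R b -> 0 <= Pev p x.
Proof.
  unfold nonneg_piece. intros H Hx. apply Qle_bool_iff, Qle_Rle in H.
  replace x with (Pev (a :: 1%Q :: nil) (x - Q2R a)).
  2:{ cbn [Pev]. replace (Q2R 1) with 1 by (unfold Q2R; simpl; field). lra. }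
  rewrite <- Pev_pcomp.
  eapply Rle_trans; [|apply lowb_sound with (h := (b - a)%Q)].
  - rewrite Q2R0 in H. lra.
  - rewrite Q2R_minus; lra.
Qed.


Fixpoint monom (k : nat) (c : Q) : list Q :=
  match k with O => [c] | S k' => 0%Q :: monom k' c end.
Definition scoef (n : nat) : Q := ((if Nat.even n then 1 else -1)%Z # Pos.of_succ_nat n).
Fixpoint Slist (n : nat) : list Q :=
  match n with O => [] | S n' => padd (Slist n') (monom n (scoef n')) end.
Definition Qev (p : list Q) (x : Q) : Q := fold_right (fun c acc => Qred (c + x * acc)) 0%Q p.

Fixpoint Tch (n : nat) : list Q * list Q :=
  match n with
  | O => ([1%Q], [0%Q; 1%Q])
  | S n' => let (a, b) := Tch n' in (b, padd (pmul [0%Q; 2%Q] b) (pscale (-1) a))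
  end.
Definition T n := fst (Tch n).
Definition gm : list Q := padd (padd [3%Q] (pscale 2 (T 1))) (padd (pscale (-2) (T 6)) (pscale (-2) (T 7))).
Definition gp : list Q := padd (padd [3%Q] (pscale 2 (T 1))) (padd (pscale 2 (T 6)) (pscale 2 (T 7))).

Definition Pcoef : list Q := [(-549#16777216); (5181#2097152); (-17684485#536870912); (3345118723#17179869184); (-55221007973#68719476736); (63871482457#17592186044416); (28668747650719#35184372088832); (-515267357456111#2251799813685248); (2198474060975721#36028797018963968); (-15327052300022813#1152921504606846976); (5220160980023857#2305843009213693952); (-43388351093183633#147573952589676412928); (67073779620486837#2361183241434822606848); (-74480559567361011#37778931862957161709568); (112093023499862159#1208925819614629174706176); (-6390590781624423#2417851639229258349412352); (10661396183916991#309485009821345068724781056)].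
Definition up_list : list (Q*Q*Q) := [((95#64),(13897609121797#35184372088832),(111180872975957#281474976710656)); ((133#64),(205889387941111#281474976710656),(205889387942697#281474976710656)); ((93#32),(75073851061781#70368744177664),(300295404248715#281474976710656)); ((31#8),(190635354445281#140737488355328),(190635354446077#140737488355328)); ((317#64),(450365223648975#281474976710656),(56295652956321#35184372088832)); ((405#64),(519322453355133#281474976710656),(519322453356727#281474976710656)); ((499#64),(578071637082049#281474976710656),(144517909270911#70368744177664)); ((283#32),(613534101508453#281474976710656),(613534101510049#281474976710656)); ((9#1),(154615934183177#70368744177664),(618463736734305#281474976710656))].
Definition dn_list : list (Q*Q*Q) := [((5#8),(-132294261038485#281474976710656),(-132294259834095#281474976710656)); ((11#32),(-18786149676771#17592186044416),(-300560345891219#281474976710656)); ((3#16),(-58900586363171#35184372088832),(-235577383143675#140737488355328)); ((23#256),(-740030113236735#281474976710656),(-619572158790737#281474976710656)); ((11#256),(-1016863666133139#281474976710656),(-761657352480321#281474976710656)); ((21#1024),(-325867949176729#70368744177664),(-447957667986945#140737488355328)); ((5#512),(-1602195177779107#281474976710656),(-1020357197466253#281474976710656))].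
Definition bot : Q := (5#512).
Definition gm_lo_pts : list Q := [(-31#32); (-29#32); (-25#32); (-21#32); (-17#32); (-15#32); (-7#16); (-13#32); (-25#64); (-3#8); (-47#128); (-23#64); (-11#32); (-3#32); (5#32); (13#32); (17#32); (19#32); (27#32); (1#1)].
Definition gm_hi_pts : list Q := [(-7#8); (-5#8); (-3#8); (-1#8); (1#8); (3#8); (5#8); (3#4); (13#16); (27#32); (7#8); (29#32); (1#1)].
Definition gp_lo_pts : list Q := [(-15#16); (-7#8); (-13#16); (-25#32); (-3#4); (-11#16); (-7#16); (-3#16); (-1#16); (0#1); (1#16); (1#8); (3#8); (5#8); (3#4); (13#16); (7#8); (1#1)].
Definition gp_hi_pts : list Q := [(-3#4); (-1#2); (-1#4); (0#1); (1#4); (3#8); (1#2); (5#8); (7#8); (1#1)].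
Definition Se_lit : list Q := [(0#1); (1#1); (-1#2); (1#3); (-1#4); (1#5); (-1#6); (1#7); (-1#8); (1#9); (-1#10)].
Definition So_lit : list Q := [(0#1); (1#1); (-1#2); (1#3); (-1#4); (1#5); (-1#6); (1#7); (-1#8); (1#9); (-1#10); (1#11)].
Definition Ce_lit : list Q := [(0#1); (1#1); (-1#2); (1#3); (-1#4); (1#5); (-1#6); (1#7); (-1#8); (1#9); (-1#10); (1#11); (-1#12); (1#13); (-1#14); (1#15); (-1#16); (1#17); (-1#18); (1#19); (-1#20); (1#21); (-1#22); (1#23); (-1#24); (1#25); (-1#26); (1#27); (-1#28); (1#29); (-1#30)].
Definition Co_lit : list Q := [(0#1); (1#1); (-1#2); (1#3); (-1#4); (1#5); (-1#6); (1#7); (-1#8); (1#9); (-1#10); (1#11); (-1#12); (1#13); (-1#14); (1#15); (-1#16); (1#17); (-1#18); (1#19); (-1#20); (1#21); (-1#22); (1#23); (-1#24); (1#25); (-1#26); (1#27); (-1#28); (1#29); (-1#30); (1#31)].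


Definition delta : Q := 1 # 1000.
Definition Lp : list Q := padd Pcoef [(-delta)%Q].
Definition Up : list Q := padd Pcoef [delta].
Definition g5 : list Q := monom 5 1.
Definition Se := Se_lit.
Definition So := So_lit.
Definition Ce := Ce_lit.
Definition Co := Co_lit.
Definition piece_ok (a b l u : Q) : bool :=
  let A := [a; a] in let h := Qred (b / a - 1) in
  let G5 := pcomp g5 A in let PA := pcomp Pcoef A in
  Qle_bool 0 (lowb (padd (pmul G5 (padd [l] Se)) (pscale (-1) (padd PA [(-delta)%Q]))) h) &&
  Qle_bool 0 (lowb (padd (padd PA [delta]) (pscale (-1) (pmul G5 (padd [u] So)))) h).
Definition Qltb (a b : Q) : bool := negb (Qle_bool b a).
Fixpoint up_ok (top : Q) (x : Q*Q*Q) (l : list (Q*Q*Q)) : bool :=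
  match l with
  | [] => let '(a, _, _) := x in Qle_bool top a
  | y :: rest =>
    let '(a, la, ua) := x in let '(b, lb, ub) := y in
    Qltb 0 a && Qltb a b &&
    Qle_bool lb (la + Qev Ce (b / a - 1)) && Qle_bool (ua + Qev Co (b / a - 1)) ub &&
    piece_ok a b la ua && up_ok top y rest
  end.
Fixpoint down_ok (bt : Q) (y : Q*Q*Q) (l : list (Q*Q*Q)) : bool :=
  match l with
  | [] => let '(b, _, _) := y in Qle_bool b bt
  | x :: rest =>
    let '(b, lb, ub) := y in let '(a, la, ua) := x in
    Qltb 0 a && Qltb a b &&
    Qle_bool la (lb - Qev Co (b / a - 1)) && Qle_bool (ub - Qev Ce (b / a - 1)) ua &&
    piece_ok a b la ua && down_ok bt x rest
  end.
Definition bottom_ok : bool :=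
  Qltb 0 bot && Qle_bool bot 1 &&
  nonneg_piece (padd (padd g5 (pscale (-1) (monom 4 1))) (pscale (-1) Lp)) 0 bot &&
  nonneg_piece Up 0 bot.
Fixpoint pieces_ok (p : list Q) (a : Q) (pts : list Q) (top : Q) : bool :=
  match pts with
  | [] => Qle_bool top a
  | b :: rest => nonneg_piece p a b && pieces_ok p b rest top
  end.
Fixpoint wal (n : nat) : Q * Q :=
  match n with
  | O => (1 # 2, 0)%Q
  | S n' => let (a, b) := wal n' in (b, Qred (a * (inject_Z (Z.of_nat (S n')) / inject_Z (Z.of_nat (S (S n'))))))
  end.
Definition w n := fst (wal n).
Fixpoint wsum (p : list Q) (k : nat) : Q :=
  match p with [] => 0%Q | c :: p' => Qred (c * w k + wsum p' (S k)) end.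
Fixpoint msum (p s acc : list Q) : Q :=
  match p with [] => 0%Q | c :: p' => Qred (c * wsum acc 0 + msum p' s (pmul s acc)) end.
Definition final_val := Qred (msum Lp gm [1%Q] - msum Up gp [1%Q]).
Definition eps := 1 # 100.


Lemma Pev_monom k c x : Pev (monom k c) x = Q2R c * x ^ k.
Proof.
  induction k as [|k IH]; cbn [Pev monom].
  - ring.
  - rewrite IH, Q2R0; simpl; ring.
Qed.

Lemma sign_even n : IZR (if Nat.even n then 1%Z else (-1)%Z) = (-1) ^ n.
Proof.
  revert n.
  assert (H : forall n, IZR (if Nat.even n then 1%Z else (-1)%Z) = (-1) ^ n /\
                        IZR (if Nat.even (S n) then 1%Z else (-1)%Z) = (-1) ^ (S n)).
  { induction n as [|n IH]; [simpl; split; lra|].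
    destruct IH as [IH1 IH2]. split; [exact IH2|].
    replace (Nat.even (S (S n))) with (Nat.even n) by reflexivity.
    rewrite IH1. simpl; ring. }
  intro n; apply H.
Qed.

Lemma Q2R_scoef n : Q2R (scoef n) * INR (S n) = (-1) ^ n.
Proof.
  unfold scoef, Q2R; cbn [Qnum Qden]. rewrite Zpos_P_of_succ_nat, sign_even.
  rewrite INR_IZR_INZ, Nat2Z.inj_succ. field.
  rewrite <- Nat2Z.inj_succ, <- INR_IZR_INZ. apply not_0_INR; lia.
Qed.

Lemma Slist_deriv n v : -1 < v ->
  is_derive (Pev (Slist n)) v ((1 - (- v) ^ n) / (1 + v)).
Proof.
  intros Hv. induction n as [|n IH].
  - cbn [Slist Pev]. replace ((1 - (- v) ^ 0) / (1 + v)) with 0 by (simpl; field; lra).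
    exact (is_derive_const (K:=R_AbsRing) (V:=R_NormedModule) 0 v).
  - cbn [Slist].
    apply (is_derive_ext (fun x => Pev (Slist n) x + Q2R (scoef n) * x ^ (S n))).
    { intro t. rewrite Pev_padd, Pev_monom. reflexivity. }
    replace ((1 - (- v) ^ S n) / (1 + v)) with
      ((1 - (- v) ^ n) / (1 + v) + Q2R (scoef n) * (INR (S n) * 1 * v ^ Init.Nat.pred (S n))).
    2:{ cbn [Init.Nat.pred]. rewrite Rmult_1_r, <- Rmult_assoc, Q2R_scoef.
        rewrite <- Rpow_mult_distr. replace (-1 * v) with (-v) by ring. simpl. field. lra. }
    exact (is_derive_plus _ _ _ _ _ IH
      (is_derive_scal _ _ _ _ (is_derive_pow _ (S n) _ _ (is_derive_id v)))).
Qed.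

Lemma Slist_0 n : Pev (Slist n) 0 = 0.
Proof.
  induction n as [|n IH]; cbn [Slist Pev]; [reflexivity|].
  rewrite Pev_padd, Pev_monom, IH. simpl; ring.
Qed.

Lemma pow_neg_even n c : Nat.even n = true -> (- c) ^ n = c ^ n.
Proof.
  intro H. apply Nat.even_spec in H. destruct H as [k ->].
  rewrite !pow_mult. f_equal. ring.
Qed.

Lemma pow_neg_odd n c : Nat.even n = false -> (- c) ^ n = - c ^ n.
Proof.
  intro H. assert (Nat.odd n = true) by (unfold Nat.odd; rewrite H; reflexivity).
  apply Nat.odd_spec in H0. destruct H0 as [k ->].
  rewrite !pow_add, pow_neg_even by (apply Nat.even_spec; exists k; reflexivity).
  simpl; ring.
Qed.

Lemma ln_series n v : 0 <= v ->
  (Nat.even n = true -> Pev (Slist n) v <= ln (1 + v)) /\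
  (Nat.even n = false -> ln (1 + v) <= Pev (Slist n) v).
Proof.
  intros Hv.
  set (h := fun x => ln (1 + x) - Pev (Slist n) x).
  assert (Hd : forall x, 0 <= x -> is_derive h x ((- x) ^ n / (1 + x))).
  { intros x Hx.
    assert (H1 : is_derive (fun x => ln (1 + x)) x (/ (1 + x))).
    { auto_derive. lra. field. lra. }
    assert (H2 := is_derive_minus _ _ _ _ _ H1 (Slist_deriv n x ltac:(lra))).
    replace ((- x) ^ n / (1 + x)) with (minus (/ (1 + x)) ((1 - (- x) ^ n) / (1 + x))).
    - exact H2.
    - unfold minus, plus, opp; simpl. field. lra. }
  destruct (MVT_gen h 0 v (fun x => (- x) ^ n / (1 + x))) as [c [Hc Hmvt]].
  - intros x Hx. rewrite Rmin_left in Hx by lra. apply Hd; lra.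
  - intros x Hx. rewrite Rmin_left in Hx by lra. apply continuity_pt_filterlim.
    apply (ex_derive_continuous (K:=R_AbsRing) (V:=R_NormedModule)).
    eexists; apply Hd; lra.
  - rewrite Rmin_left, Rmax_right in Hc by lra.
    assert (h0 : h 0 = 0) by (unfold h; rewrite Slist_0, Rplus_0_r, ln_1; ring).
    rewrite h0 in Hmvt. unfold h in Hmvt.
    assert (Hpos : 0 < 1 + c) by lra.
    split; intro He.
    + rewrite pow_neg_even in Hmvt by exact He.
      assert (0 <= c ^ n / (1 + c) * (v - 0)).
      { apply Rmult_le_pos; [|lra]. apply Rmult_le_pos; [apply pow_le; lra|].
        left; apply Rinv_0_lt_compat; lra. }
      lra.
    + rewrite pow_neg_odd in Hmvt by exact He.
      assert (0 <= c ^ n / (1 + c) * (v - 0)).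
      { apply Rmult_le_pos; [|lra]. apply Rmult_le_pos; [apply pow_le; lra|].
        left; apply Rinv_0_lt_compat; lra. }
      assert (- c ^ n / (1 + c) * (v - 0) = - (c ^ n / (1 + c) * (v - 0))) by (field; lra).
      lra.
Qed.


Lemma Q2R1 : Q2R 1 = 1. Proof. unfold Q2R; simpl; field. Qed.
Lemma Q2Rm1 : Q2R (-1) = -1. Proof. unfold Q2R; simpl; field. Qed.

Lemma Qev_ok p x : Q2R (Qev p x) = Pev p (Q2R x).
Proof.
  induction p as [|c p IH]; cbn [Qev fold_right Pev].
  - apply Q2R0.
  - unfold Qev in IH. rewrite Q2R_Qred, Q2R_plus, Q2R_mult, IH. reflexivity.
Qed.

Lemma Qle_bool_R a b : Qle_bool a b = true -> Q2R a <= Q2R b.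
Proof. apply RMicromega.Qle_true. Qed.

Lemma Qltb_R a b : Qltb a b = true -> Q2R a < Q2R b.
Proof.
  unfold Qltb. intro H. apply Qlt_Rlt. apply Qnot_le_lt. intro H'.
  apply Qle_bool_iff in H'. rewrite H' in H. discriminate.
Qed.

Definition bnd (g : R) := Pev Lp g <= g ^ 5 * ln g <= Pev Up g.

Lemma Pev_g5 g : Pev g5 g = g ^ 5.
Proof. unfold g5. rewrite Pev_monom, Q2R1. ring. Qed.

Lemma Se_eq : Se = Slist 10. Proof. vm_compute. reflexivity. Qed.
Lemma So_eq : So = Slist 11. Proof. vm_compute. reflexivity. Qed.
Lemma Ce_eq : Ce = Slist 30. Proof. vm_compute. reflexivity. Qed.
Lemma Co_eq : Co = Slist 31. Proof. vm_compute. reflexivity. Qed.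

Lemma piece_sound a b l u g :
  piece_ok a b l u = true -> 0 < Q2R a -> Q2R l <= ln (Q2R a) <= Q2R u ->
  Q2R a <= g <= Q2R b -> bnd g.
Proof.
  unfold piece_ok. intros H Ha Hl Hg. apply andb_true_iff in H as [H1 H2].
  apply Qle_bool_R in H1, H2. rewrite Q2R0 in H1, H2.
  assert (Hnz : ~ (a == 0)%Q) by (intro E; apply Qeq_eqR in E; rewrite Q2R0 in E; lra).
  set (v := g / Q2R a - 1).
  assert (HA : Pev [a; a] v = g).
  { cbn [Pev]. unfold v. field. lra. }
  assert (Hh : Q2R (Qred (b / a - 1)) = Q2R b / Q2R a - 1).
  { rewrite Q2R_Qred, Q2R_minus, Q2R_div by exact Hnz. rewrite Q2R1. reflexivity. }
  assert (Hv : 0 <= v <= Q2R (Qred (b / a - 1))).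
  { rewrite Hh. unfold v. split.
    - assert (v * Q2R a = g - Q2R a) by (unfold v; field; lra). unfold v in H. nra.
    - assert (g / Q2R a <= Q2R b / Q2R a); [|lra].
      apply Rmult_le_compat_r; [left; apply Rinv_0_lt_compat; lra|lra]. }
  assert (Hlng : ln g = ln (Q2R a) + ln (1 + v)).
  { rewrite <- ln_mult by (unfold v; try lra; replace (1 + (g / Q2R a - 1)) with (g / Q2R a) by ring;
      apply Rdiv_lt_0_compat; lra).
    f_equal. unfold v. field. lra. }
  assert (Hv0 : 0 <= v) by lra.
  assert (Hg5 : 0 <= g ^ 5) by (apply pow_le; lra).
  pose proof (lowb_sound (padd (pmul (pcomp g5 [a; a]) (padd [l] Se)) (pscale (-1) (padd (pcomp Pcoef [a; a]) [(-delta)%Q]))) _ _ Hv) as P1.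
  pose proof (lowb_sound (padd (padd (pcomp Pcoef [a; a]) [delta]) (pscale (-1) (pmul (pcomp g5 [a; a]) (padd [u] So)))) _ _ Hv) as P2.
  rewrite !Pev_padd, !Pev_pscale, !Pev_pmul, !Pev_padd, !Pev_pcomp, HA, Pev_g5, Q2Rm1 in P1, P2.
  cbn [Pev] in P1, P2.
  destruct (ln_series 10 v Hv0) as [S1 _]. specialize (S1 eq_refl).
  destruct (ln_series 11 v Hv0) as [_ S2]. specialize (S2 eq_refl).
  rewrite <- Se_eq in S1. rewrite <- So_eq in S2.
  unfold bnd, Lp, Up. rewrite !Pev_padd. cbn [Pev].
  split.
  - assert (g ^ 5 * (Q2R l + Pev Se v) <= g ^ 5 * ln g) by (apply Rmult_le_compat_l; lra).
    lra.
  - assert (g ^ 5 * ln g <= g ^ 5 * (Q2R u + Pev So v)) by (apply Rmult_le_compat_l; lra).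
    lra.
Qed.

Lemma ratio_facts a b : 0 < Q2R a -> Q2R a < Q2R b ->
  let r := Q2R (b / a - 1) in 0 <= r /\ ln (Q2R b) = ln (Q2R a) + ln (1 + r).
Proof.
  intros Ha Hab r.
  assert (Hnz : ~ (a == 0)%Q) by (intro E; apply Qeq_eqR in E; rewrite Q2R0 in E; lra).
  assert (Hr : r = Q2R b / Q2R a - 1).
  { unfold r. rewrite Q2R_minus, Q2R_div by exact Hnz. rewrite Q2R1. reflexivity. }
  assert (r * Q2R a = Q2R b - Q2R a) by (rewrite Hr; field; lra).
  split; [nra|].
  rewrite <- ln_mult by nra. f_equal. rewrite Hr. field. lra.
Qed.

Lemma up_sound top l : forall a la ua, up_ok top (a, la, ua) l = true -> 0 < Q2R a ->
  Q2R la <= ln (Q2R a) <= Q2R ua -> forall g, Q2R a < g <= Q2R top -> bnd g.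
Proof.
  induction l as [|[[b lb] ub] rest IH]; intros a la ua H Ha Hln g Hg.
  - cbn in H. apply Qle_bool_R in H. lra.
  - cbn [up_ok] in H.
    repeat rewrite andb_true_iff in H.
    destruct H as [[[[[H0 H1] H2] H3] H4] H5].
    apply Qltb_R in H1. apply Qle_bool_R in H2, H3.
    destruct (ratio_facts a b Ha H1) as [Hr Hlnb].
    rewrite Q2R_plus, Qev_ok in H2, H3.
    destruct (ln_series 30 _ Hr) as [S1 _]. specialize (S1 eq_refl).
    destruct (ln_series 31 _ Hr) as [_ S2]. specialize (S2 eq_refl).
    rewrite <- Ce_eq in S1. rewrite <- Co_eq in S2.
    destruct (Rle_lt_dec g (Q2R b)) as [Hgb|Hgb].
    + apply (piece_sound a b la ua g H4 Ha Hln). lra.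
    + apply (IH b lb ub H5); lra.
Qed.

Lemma down_sound bt l : forall b lb ub, down_ok bt (b, lb, ub) l = true ->
  Q2R lb <= ln (Q2R b) <= Q2R ub -> forall g, Q2R bt <= g < Q2R b -> bnd g.
Proof.
  induction l as [|[[a la] ua] rest IH]; intros b lb ub H Hln g Hg.
  - cbn in H. apply Qle_bool_R in H. lra.
  - cbn [down_ok] in H.
    repeat rewrite andb_true_iff in H.
    destruct H as [[[[[H0 H1] H2] H3] H4] H5].
    apply Qltb_R in H0, H1. rewrite Q2R0 in H0. apply Qle_bool_R in H2, H3.
    destruct (ratio_facts a b H0 H1) as [Hr Hlnb].
    rewrite Q2R_minus, Qev_ok in H2, H3.
    destruct (ln_series 30 _ Hr) as [S1 _]. specialize (S1 eq_refl).
    destruct (ln_series 31 _ Hr) as [_ S2]. specialize (S2 eq_refl).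
    rewrite <- Ce_eq in S1. rewrite <- Co_eq in S2.
    assert (Hla : Q2R la <= ln (Q2R a) <= Q2R ua) by lra.
    destruct (Rle_lt_dec (Q2R a) g) as [Hga|Hga].
    + apply (piece_sound a b la ua g H4 H0 Hla). lra.
    + apply (IH a la ua H5 Hla); lra.
Qed.

Definition first_up : Q := match up_list with (b, _, _) :: _ => b | _ => 1%Q end.
Lemma up_list_ok : up_ok 9 (1, 0, 0)%Q up_list = true. Proof. vm_compute. reflexivity. Qed.
Lemma dn_list_ok : down_ok bot (1, 0, 0)%Q dn_list = true. Proof. vm_compute. reflexivity. Qed.
Lemma bottom_ok_t : bottom_ok = true. Proof. vm_compute. reflexivity. Qed.
Lemma first_ok : piece_ok 1 first_up 0 0 = true /\ Qltb 1 first_up = true.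
Proof. vm_compute. split; reflexivity. Qed.

Lemma Slist1 v : Pev (Slist 1) v = v.
Proof.
  cbn [Slist]. rewrite Pev_padd, Pev_monom. cbn [Pev].
  pose proof (Q2R_scoef 0) as H. simpl in H. rewrite Rmult_1_r in H. rewrite H. ring.
Qed.

Lemma bound_all g : 0 < g <= 9 -> bnd g.
Proof.
  intros Hg.
  pose proof bottom_ok_t as HB. unfold bottom_ok in HB.
  repeat rewrite andb_true_iff in HB. destruct HB as [[[B0 B1] B2] B3].
  apply Qltb_R in B0. apply Qle_bool_R in B1. rewrite Q2R0 in B0. rewrite Q2R1 in B1.
  destruct (Rle_lt_dec g (Q2R bot)) as [Hb|Hb].
  - assert (Hg' : Q2R 0 <= g <= Q2R bot) by (rewrite Q2R0; lra).
    pose proof (nonneg_piece_sound _ _ _ _ B2 Hg') as P1.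
    pose proof (nonneg_piece_sound _ _ _ _ B3 Hg') as P2.
    rewrite !Pev_padd, !Pev_pscale, Pev_g5, Pev_monom, Q2R1, Q2Rm1 in P1.
    assert (Hln0 : ln g <= 0) by (rewrite <- ln_1; apply ln_le; lra).
    assert (Hv : 0 <= / g - 1).
    { assert (/ g * g = 1) by (field; lra). nra. }
    destruct (ln_series 1 _ Hv) as [_ S]. specialize (S eq_refl). rewrite Slist1 in S.
    replace (1 + (/ g - 1)) with (/ g) in S by ring. rewrite ln_Rinv in S by lra.
    assert (Hg5 : 0 <= g ^ 5) by (apply pow_le; lra).
    unfold bnd; split.
    + assert (g ^ 5 * (1 - / g) <= g ^ 5 * ln g) by (apply Rmult_le_compat_l; lra).
      replace (g ^ 5 * (1 - / g)) with (g ^ 5 - g ^ 4) in H by (field; lra). lra.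
    + assert (g ^ 5 * ln g <= 0) by nra. lra.
  - destruct (Rlt_le_dec g 1) as [H1|H1].
    + apply (down_sound bot dn_list 1 0 0 dn_list_ok); rewrite ?Q2R0, ?Q2R1, ?ln_1; lra.
    + destruct (Req_dec g 1) as [E|E].
      * destruct first_ok as [F1 F2]. apply Qltb_R in F2.
        apply (piece_sound 1 first_up 0 0 g F1); rewrite ?Q2R0, ?Q2R1, ?ln_1; lra.
      * apply (up_sound 9 up_list 1 0 0 up_list_ok); rewrite ?Q2R0, ?Q2R1, ?ln_1; try lra.

Qed.


Lemma Tch_ok n th : Pev (fst (Tch n)) (cos th) = cos (INR n * th) /\
                    Pev (snd (Tch n)) (cos th) = cos (INR (S n) * th).
Proof.
  induction n as [|n IH].
  - cbn [Tch fst snd Pev]. rewrite Q2R1, Q2R0. simpl. rewrite Rmult_0_l, Rmult_1_l, cos_0. split; ring.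
  - cbn [Tch]. destruct (Tch n) as [a b]. cbn [fst snd] in *. destruct IH as [IH1 IH2].
    split; [exact IH2|].
    rewrite Pev_padd, Pev_pmul, Pev_pscale, IH1, IH2. cbn [Pev]. rewrite Q2R0, Q2Rm1.
    replace (Q2R 2) with 2 by (unfold Q2R; simpl; field).
    rewrite !S_INR.
    replace ((INR n + 1 + 1) * th) with ((INR n + 1) * th + th) by ring.
    replace (INR n * th) with ((INR n + 1) * th - th) by ring.
    rewrite cos_plus, cos_minus. ring.
Qed.

Lemma T_ok n th : Pev (T n) (cos th) = cos (INR n * th).
Proof. apply Tch_ok. Qed.

Lemma Q2R_Z (z : Z) : Q2R (z # 1) = IZR z.
Proof. unfold Q2R; simpl; field. Qed.

Lemma Cmod_sq (z : C) : Cmod z ^ 2 = fst z ^ 2 + snd z ^ 2.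
Proof. unfold Cmod. rewrite pow2_sqrt; [reflexivity|]. nra. Qed.

Lemma G_core (eps a : R) : eps * eps = 1 ->
  (1 + cos a + eps * cos (7 * a)) ^ 2 + (0 + sin a + eps * sin (7 * a)) ^ 2 =
  3 + 2 * cos a + 2 * eps * cos (6 * a) + 2 * eps * cos (7 * a).
Proof.
  intros He.
  replace (6 * a) with (7 * a - a) by ring. rewrite cos_minus.
  pose proof (sin2_cos2 a). pose proof (sin2_cos2 (7 * a)). unfold Rsqr in *.
  nra.
Qed.

Lemma Gminus_poly x : Gminus x = Pev gm (cos (2 * PI * x)).
Proof.
  unfold Gminus, gm. rewrite Cmod_sq. unfold cis; cbn [Cplus Copp RtoC fst snd].
  rewrite !Pev_padd, !Pev_pscale, !T_ok. cbn [Pev]. rewrite !Q2R_Z, Rmult_0_r, Rplus_0_r.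
  replace (14 * PI * x) with (7 * (2 * PI * x)) by ring.
  replace (1 + cos (2 * PI * x) + - cos (7 * (2 * PI * x))) with
    (1 + cos (2 * PI * x) + (-1) * cos (7 * (2 * PI * x))) by ring.
  replace (0 + sin (2 * PI * x) + - sin (7 * (2 * PI * x))) with
    (0 + sin (2 * PI * x) + (-1) * sin (7 * (2 * PI * x))) by ring.
  rewrite G_core by ring.
  replace (INR 6) with 6 by (simpl; ring). replace (INR 7) with 7 by (simpl; ring).
  replace (INR 1) with 1 by (simpl; ring). rewrite Rmult_1_l. ring.
Qed.

Lemma Gplus_poly x : Gplus x = Pev gp (cos (2 * PI * x)).
Proof.
  unfold Gplus, gp. rewrite Cmod_sq. unfold cis; cbn [Cplus Copp RtoC fst snd].
  rewrite !Pev_padd, !Pev_pscale, !T_ok. cbn [Pev]. rewrite !Q2R_Z, Rmult_0_r, Rplus_0_r.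
  replace (14 * PI * x) with (7 * (2 * PI * x)) by ring.
  replace (1 + cos (2 * PI * x) + cos (7 * (2 * PI * x))) with
    (1 + cos (2 * PI * x) + 1 * cos (7 * (2 * PI * x))) by ring.
  replace (0 + sin (2 * PI * x) + sin (7 * (2 * PI * x))) with
    (0 + sin (2 * PI * x) + 1 * sin (7 * (2 * PI * x))) by ring.
  rewrite G_core by ring.
  replace (INR 6) with 6 by (simpl; ring). replace (INR 7) with 7 by (simpl; ring).
  replace (INR 1) with 1 by (simpl; ring). rewrite Rmult_1_l. ring.
Qed.


Lemma is_RInt_lin (f g : R -> R) a b If Ig al be :
  is_RInt f a b If -> is_RInt g a b Ig ->
  is_RInt (fun x => al * f x + be * g x) a b (al * If + be * Ig).
Proof.
  intros Hf Hg. exact (is_RInt_plus _ _ _ _ _ _ (is_RInt_scal _ _ _ al _ Hf) (is_RInt_scal _ _ _ be _ Hg)).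
Qed.

Definition cs (x : R) := cos (2 * PI * x).

Lemma W_rec n Wn : is_RInt (fun x => cs x ^ n) 0 (1/2) Wn ->
  is_RInt (fun x => cs x ^ S (S n)) 0 (1/2) (INR (S n) / INR (S (S n)) * Wn).
Proof.
  intros HW.
  set (F := fun x => sin (2 * PI * x) * cos (2 * PI * x) ^ S n).
  set (Df := fun x => 2 * PI * (INR (S (S n)) * cs x ^ S (S n) - INR (S n) * cs x ^ n)).
  assert (HD : forall x, is_derive F x (Df x)).
  { intro x. unfold F, Df, cs. auto_derive; [auto|].
    pose proof (sin2_cos2 (2 * PI * x)) as E. unfold Rsqr in E.
    cbn [Init.Nat.pred pow].
    change (match n with 0%nat => 1 | S _ => INR n + 1 end) with (INR (S n)).
    rewrite !S_INR.
    set (c := cos (2 * PI * x)) in *. set (s := sin (2 * PI * x)) in *.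
    transitivity (2 * PI * (c * c * c ^ n) - 2 * PI * (INR n + 1) * c ^ n * (s * s)).
    2:{ replace (s * s) with (1 - c * c) by lra. ring. }
    ring. }
  assert (HI : is_RInt Df 0 (1/2) 0).
  { assert (Hc : forall x, Rmin 0 (1/2) <= x <= Rmax 0 (1/2) -> continuous Df x).
    { intros x _. apply (ex_derive_continuous (K:=R_AbsRing) (V:=R_NormedModule)).
      unfold Df, cs. auto_derive. auto. }
    pose proof (is_RInt_derive F Df 0 (1/2) (fun x _ => HD x) Hc) as H.
    assert (E : minus (F (1/2)) (F 0) = 0).
    { unfold F. replace (2 * PI * (1/2)) with PI by field. rewrite Rmult_0_r, sin_PI, sin_0.
      unfold minus, plus, opp; simpl; ring. }
    exact (eq_rect _ (fun v => is_RInt Df 0 (1/2) v) H _ E). }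
  assert (HS : 0 < INR (S (S n))) by (apply lt_0_INR; lia).
  pose proof (is_RInt_lin _ _ _ _ _ _ (/ (2 * PI * INR (S (S n)))) (INR (S n) / INR (S (S n))) HI HW) as H.
  replace (/ (2 * PI * INR (S (S n))) * 0 + INR (S n) / INR (S (S n)) * Wn)
    with (INR (S n) / INR (S (S n)) * Wn) in H by ring.
  apply (is_RInt_ext _ _ _ _ _ (fun x _ => eq_refl) ) in H.
  eapply is_RInt_ext; [|exact H].
  intros x _. unfold Df.
  assert (E : / (2 * PI * INR (S (S n))) *
    (2 * PI * (INR (S (S n)) * cs x ^ S (S n) - INR (S n) * cs x ^ n)) +
    INR (S n) / INR (S (S n)) * cs x ^ n = cs x ^ S (S n) :> R).
  { field. split; [lra|]. pose proof PI_RGT_0. lra. }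
  exact E.
Qed.

Lemma w_SS n : w (S (S n)) = Qred (w n * (inject_Z (Z.of_nat (S n)) / inject_Z (Z.of_nat (S (S n))))).
Proof. unfold w. cbn [wal]. destruct (wal n). reflexivity. Qed.

Lemma Q2R_inject_nat k : Q2R (inject_Z (Z.of_nat k)) = INR k.
Proof. unfold Q2R, inject_Z; simpl. rewrite INR_IZR_INZ. field. Qed.

Lemma is_RInt_eq (f : R -> R) a b l l' : is_RInt f a b l -> l = l' -> is_RInt f a b l'.
Proof. intros H E. subst. exact H. Qed.

Ltac toR := match goal with |- ?a = ?b => change (@eq R a b) end.

Lemma W_all : forall n, is_RInt (fun x => cs x ^ n) 0 (1/2) (Q2R (w n)).
Proof.
  assert (H : forall n, is_RInt (fun x => cs x ^ n) 0 (1/2) (Q2R (w n)) /\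
                        is_RInt (fun x => cs x ^ S n) 0 (1/2) (Q2R (w (S n)))).
  { induction n as [|n [IH1 IH2]].
    - split.
      + eapply is_RInt_ext; [|apply (is_RInt_eq _ _ _ _ _ (is_RInt_const 0 (1/2) 1))].
        * intros x _. simpl. reflexivity.
        * unfold w; simpl. unfold Q2R; simpl. unfold scal; simpl. unfold mult; simpl. field.
      + assert (Hd : forall x, Rmin 0 (1/2) <= x <= Rmax 0 (1/2) ->
          is_derive (fun x => sin (2 * PI * x) / (2 * PI)) x (cs x ^ 1)).
        { intros x _. unfold cs. auto_derive; [auto|]. field. pose proof PI_RGT_0. lra. }
        assert (Hc : forall x, Rmin 0 (1/2) <= x <= Rmax 0 (1/2) -> continuous (fun x => cs x ^ 1) x).
        { intros x _. apply (ex_derive_continuous (K:=R_AbsRing) (V:=R_NormedModule)).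
          unfold cs. auto_derive. auto. }
        pose proof (is_RInt_derive _ _ _ _ Hd Hc) as H.
        apply (is_RInt_eq _ _ _ _ _ H).
        replace (2 * PI * (1/2)) with PI by field. rewrite Rmult_0_r, sin_PI, sin_0.
        unfold w; simpl. rewrite Q2R0. unfold minus, plus, opp; simpl. field. pose proof PI_RGT_0. lra.
    - split; [exact IH2|].
      apply (is_RInt_eq _ _ _ _ _ (W_rec n _ IH1)).
      rewrite w_SS, Q2R_Qred, Q2R_mult, Q2R_div, !Q2R_inject_nat.
      + toR. ring.
      + intro E. apply Qeq_eqR in E. rewrite Q2R_inject_nat, Q2R0 in E.
        assert (HS : INR (S (S n)) <> 0) by (apply not_0_INR; lia). exact (HS E). }
  intro n; exact (proj1 (H n)).
Qed.

Lemma wsum_ok : forall p k, is_RInt (fun x => cs x ^ k * Pev p (cs x)) 0 (1/2) (Q2R (wsum p k)).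
Proof.
  induction p as [|c p IH]; intro k.
  - cbn [wsum Pev]. rewrite Q2R0.
    eapply is_RInt_ext; [|apply (is_RInt_eq _ _ _ _ _ (is_RInt_const 0 (1/2) 0))].
    + intros x _. simpl. ring.
    + unfold scal; simpl; unfold mult; simpl; ring.
  - cbn [wsum Pev]. rewrite Q2R_Qred, Q2R_plus, Q2R_mult.
    pose proof (is_RInt_lin _ _ _ _ _ _ (Q2R c) 1 (W_all k) (IH (S k))) as H.
    eapply is_RInt_ext; [|apply (is_RInt_eq _ _ _ _ _ H)].
    + intros x _. simpl. ring.
    + toR. ring.
Qed.

Lemma integral_poly p : is_RInt (fun x => Pev p (cs x)) 0 (1/2) (Q2R (wsum p 0)).
Proof.
  eapply is_RInt_ext; [|apply wsum_ok]. intros x _. simpl. ring.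
Qed.

Lemma msum_ok s : forall p acc k, (forall y, Pev acc y = (Pev s y) ^ k) ->
  is_RInt (fun x => (Pev s (cs x)) ^ k * Pev p (Pev s (cs x))) 0 (1/2) (Q2R (msum p s acc)).
Proof.
  induction p as [|c p IH]; intros acc k Hacc.
  - cbn [msum Pev]. rewrite Q2R0.
    eapply is_RInt_ext; [|apply (is_RInt_eq _ _ _ _ _ (is_RInt_const 0 (1/2) 0))].
    + intros x _. simpl. ring.
    + unfold scal; simpl; unfold mult; simpl; ring.
  - cbn [msum Pev]. rewrite Q2R_Qred, Q2R_plus, Q2R_mult.
    assert (Hacc' : forall y, Pev (pmul s acc) y = (Pev s y) ^ S k).
    { intro y. rewrite Pev_pmul, Hacc. simpl. ring. }
    pose proof (is_RInt_lin _ _ _ _ _ _ (Q2R c) 1 (integral_poly acc) (IH _ _ Hacc')) as H.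
    eapply is_RInt_ext; [|apply (is_RInt_eq _ _ _ _ _ H)].
    + intros x _. cbv beta. rewrite Hacc. simpl. ring.
    + toR. ring.
Qed.

Lemma msum_int p s : is_RInt (fun x => Pev p (Pev s (cs x))) 0 (1/2) (Q2R (msum p s [1%Q])).
Proof.
  eapply is_RInt_ext; [|apply (msum_ok s p [1%Q] 0)].
  - intros x _. simpl. ring.
  - intro y. cbn [Pev]. rewrite Q2R1. simpl. ring.
Qed.


Lemma cont_mult (f g : R -> R) x : continuous f x -> continuous g x -> continuous (fun y => f y * g y) x.
Proof. intros; exact (continuous_mult f g x H H0). Qed.
Lemma cont_plus (f g : R -> R) x : continuous f x -> continuous g x -> continuous (fun y => f y + g y) x.
Proof. intros; exact (continuous_plus f g x H H0). Qed.
Lemma cont_minus (f g : R -> R) x : continuous f x -> continuous g x -> continuous (fun y => f y - g y) x.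
Proof. intros; exact (continuous_minus f g x H H0). Qed.
Lemma cont_comp (f g : R -> R) x : continuous f x -> continuous g (f x) -> continuous (fun y => g (f y)) x.
Proof. intros; exact (continuous_comp f g x H H0). Qed.
Lemma cont_const (c x : R) : continuous (fun _ => c) x.
Proof. exact (continuous_const c x). Qed.
Lemma cont_id (x : R) : continuous (fun y => y) x.
Proof. exact (continuous_id x). Qed.

Lemma cont_Pev p x : continuous (Pev p) x.
Proof.
  induction p as [|c p IH].
  - apply cont_const.
  - apply (cont_plus (fun _ => Q2R c) (fun y => y * Pev p y)); [apply cont_const|].
    apply cont_mult; [apply cont_id|exact IH].
Qed.

Lemma cont_cs x : continuous cs x.
Proof.
  apply (cont_comp (fun y => 2 * PI * y) cos); [|apply continuous_cos].
  apply cont_mult; [apply cont_const|apply cont_id].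
Qed.

Lemma pieces_open p pts : forall a top, pieces_ok p a pts top = true ->
  forall c, Q2R a < c <= Q2R top -> 0 <= Pev p c.
Proof.
  induction pts as [|b rest IH]; intros a top H c Hc.
  - cbn in H. apply Qle_bool_R in H. lra.
  - cbn [pieces_ok] in H. apply andb_true_iff in H as [H1 H2].
    destruct (Rle_lt_dec c (Q2R b)).
    + apply (nonneg_piece_sound _ _ _ _ H1). lra.
    + apply (IH b top H2). lra.
Qed.

Lemma pieces_closed p b rest a top : pieces_ok p a (b :: rest) top = true ->
  forall c, Q2R a <= c <= Q2R top -> 0 <= Pev p c.
Proof.
  intros H c Hc. cbn [pieces_ok] in H. apply andb_true_iff in H as [H1 H2].
  destruct (Rle_lt_dec c (Q2R b)).
  - apply (nonneg_piece_sound _ _ _ _ H1). lra.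
  - apply (pieces_open _ _ _ _ H2). lra.
Qed.

Lemma pos_checks :
  pieces_ok (padd gm [(-eps)%Q]) (-1) gm_lo_pts 1 = true /\
  pieces_ok (padd [9%Q] (pscale (-1) gm)) (-1) gm_hi_pts 1 = true /\
  pieces_ok (padd gp [(-eps)%Q]) (-1) gp_lo_pts 1 = true /\
  pieces_ok (padd [9%Q] (pscale (-1) gp)) (-1) gp_hi_pts 1 = true.
Proof. vm_compute. repeat split. Qed.

Lemma Q2R_m1 : Q2R (-1) = -1. Proof. unfold Q2R; simpl; field. Qed.

Lemma G_range x : 0 < Gminus x <= 9 /\ 0 < Gplus x <= 9.
Proof.
  rewrite Gminus_poly, Gplus_poly. fold (cs x).
  assert (Hc : Q2R (-1) <= cs x <= Q2R 1).
  { rewrite Q2R_m1, Q2R1. unfold cs. apply COS_bound. }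
  destruct pos_checks as [H1 [H2 [H3 H4]]].
  assert (He : Q2R eps = 1/100) by (unfold Q2R, eps; simpl; field).
  assert (E9 : Q2R 9 = 9) by (unfold Q2R; simpl; field).
  unfold gm_lo_pts in H1. pose proof (pieces_closed _ _ _ _ _ H1 _ Hc) as P1.
  unfold gm_hi_pts in H2. pose proof (pieces_closed _ _ _ _ _ H2 _ Hc) as P2.
  unfold gp_lo_pts in H3. pose proof (pieces_closed _ _ _ _ _ H3 _ Hc) as P3.
  unfold gp_hi_pts in H4. pose proof (pieces_closed _ _ _ _ _ H4 _ Hc) as P4.
  rewrite Pev_padd in P1, P3. rewrite Pev_padd, Pev_pscale in P2, P4. cbn [Pev] in *.
  rewrite Q2R_opp, He in P1, P3. rewrite E9, Q2R_m1 in P2, P4. lra.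
Qed.

Lemma cont_Gm x : continuous Gminus x.
Proof.
  apply (continuous_ext (fun y => Pev gm (cs y))); [intro y; symmetry; apply Gminus_poly|].
  apply (cont_comp cs (Pev gm)); [apply cont_cs|apply cont_Pev].
Qed.
Lemma cont_Gp x : continuous Gplus x.
Proof.
  apply (continuous_ext (fun y => Pev gp (cs y))); [intro y; symmetry; apply Gplus_poly|].
  apply (cont_comp cs (Pev gp)); [apply cont_cs|apply cont_Pev].
Qed.

Lemma cont_lnG (G : R -> R) x : (forall y, 0 < G y) -> continuous G x -> continuous (fun y => ln (G y)) x.
Proof. intros Hp Hc. apply (cont_comp G ln); [exact Hc|]. apply continuous_ln, Hp. Qed.

Lemma Gm_pos y : 0 < Gminus y. Proof. apply G_range. Qed.
Lemma Gp_pos y : 0 < Gplus y. Proof. apply G_range. Qed.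

Lemma rpow_pos a t : 0 < a -> rpow a t = exp (t * ln a).
Proof. intro Ha. unfold rpow. destruct (Req_EM_T a 0); [lra|]. reflexivity. Qed.

Definition fI (u t : R) := rpow (Gminus t) u - rpow (Gplus t) u.
Definition dfI (u t : R) := ln (Gminus t) * exp (u * ln (Gminus t)) - ln (Gplus t) * exp (u * ln (Gplus t)).

Lemma fI_eq u t : fI u t = exp (u * ln (Gminus t)) - exp (u * ln (Gplus t)).
Proof. unfold fI. rewrite !rpow_pos by (apply G_range). reflexivity. Qed.

Lemma fI_der u t : is_derive (fun z => fI z t) u (dfI u t).
Proof.
  apply (is_derive_ext (fun z => exp (z * ln (Gminus t)) - exp (z * ln (Gplus t)))).
  { intro z; symmetry; apply fI_eq. }
  unfold dfI. auto_derive; [auto|]. ring.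
Qed.

Lemma Derive_fI u t : Derive (fun z => fI z t) u = dfI u t.
Proof. apply is_derive_unique, fI_der. Qed.

Lemma cont2_lnG (G : R -> R) u t : (forall y, 0 < G y) -> (forall y, continuous G y) ->
  continuity_2d_pt (fun _ v => ln (G v)) u t.
Proof.
  intros Hp Hc.
  apply (continuity_1d_2d_pt_comp (fun v => ln (G v)) (fun _ v => v)); [|apply continuity_2d_pt_id2].
  apply continuity_pt_filterlim. apply cont_lnG; auto.
Qed.

Lemma cont2_dfI u t : continuity_2d_pt dfI u t.
Proof.
  unfold dfI.
  assert (Hm := cont2_lnG Gminus u t Gm_pos cont_Gm).
  assert (Hp := cont2_lnG Gplus u t Gp_pos cont_Gp).
  apply continuity_2d_pt_minus; apply continuity_2d_pt_mult; auto;
  apply (continuity_1d_2d_pt_comp exp);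
  try (apply continuity_pt_filterlim; apply continuous_exp);
  apply continuity_2d_pt_mult; auto; apply continuity_2d_pt_id1.
Qed.

Lemma cont_fI u t : continuous (fun t => fI u t) t.
Proof.
  apply (continuous_ext (fun t => exp (u * ln (Gminus t)) - exp (u * ln (Gplus t)))).
  { intro; symmetry; apply fI_eq. }
  apply cont_minus; apply continuous_exp_comp; apply cont_mult; try apply cont_const;
  apply cont_lnG; auto using Gm_pos, Gp_pos, cont_Gm, cont_Gp.
Qed.

Lemma cont_dfI u t : continuous (fun t => dfI u t) t.
Proof.
  unfold dfI.
  apply cont_minus; apply cont_mult;
  try (apply continuous_exp_comp; apply cont_mult; try apply cont_const);
  apply cont_lnG; auto using Gm_pos, Gp_pos, cont_Gm, cont_Gp.
Qed.

Lemma d_derive : is_derive d 5 (RInt (fun t => dfI 5 t) 0 (1/2)).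
Proof.
  assert (H := is_derive_RInt_param fI 0 (1/2) 5).
  assert (E : RInt (fun t => Derive (fun u => fI u t) 5) 0 (1/2) = RInt (fun t => dfI 5 t) 0 (1/2)).
  { apply RInt_ext. intros x _. apply Derive_fI. }
  rewrite E in H. apply H.
  - apply filter_forall. intros y t _. eexists; apply fI_der.
  - intros t _. apply (continuity_2d_pt_ext dfI); [|apply cont2_dfI].
    intros u v; symmetry; apply Derive_fI.
  - apply filter_forall. intros y. apply (ex_RInt_continuous (V:=R_CompleteNormedModule)). intros z _. apply cont_fI.
Qed.

Lemma final_pos : Qltb 0 final_val = true.
Proof. vm_compute. reflexivity. Qed.

Lemma exp5 a : 0 < a -> exp (5 * ln a) = a ^ 5.
Proof.
  intro Ha. rewrite <- (Rpower_pow 5 a Ha). unfold Rpower. f_equal. f_equal. simpl. ring.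
Qed.

Theorem lemma4 : exists l : R, is_derive d 5 l /\ 0 < l.
Proof.
  exists (RInt (fun t => dfI 5 t) 0 (1/2)). split; [apply d_derive|].
  apply Rlt_le_trans with (Q2R final_val).
  { pose proof (Qltb_R _ _ final_pos) as H. rewrite Q2R0 in H. exact H. }
  assert (HI := is_RInt_lin _ _ _ _ _ _ 1 (-1) (msum_int Lp gm) (msum_int Up gp)).
  replace (Q2R final_val) with (1 * Q2R (msum Lp gm [1%Q]) + -1 * Q2R (msum Up gp [1%Q]))
    by (unfold final_val; rewrite Q2R_Qred, Q2R_minus; ring).
  rewrite <- (is_RInt_unique _ _ _ _ HI).
  apply RInt_le.
  - lra.
  - eexists; exact HI.
  - apply (ex_RInt_continuous (V:=R_CompleteNormedModule)). intros z _. apply cont_dfI.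
  - intros t _. unfold dfI.
    unfold cs. rewrite <- Gminus_poly, <- Gplus_poly.
    destruct (G_range t) as [[Hm1 Hm2] [Hp1 Hp2]].
    rewrite !exp5 by assumption.
    destruct (bound_all (Gminus t) (conj Hm1 Hm2)) as [B1 _].
    destruct (bound_all (Gplus t) (conj Hp1 Hp2)) as [_ B2].
    lra.
Qed.
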